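(* Let $n\ge1$ and let $f:I^n\to\mathbb{R}$ be a bounded function. Let $x=(x_1,\ldots,x_n)\in(0,1)^n$ be a point at which $f$ is (Fréchet) differentiable. Then for each $k=1,\ldots,n$, $$\lim_{m\to\infty}\frac{\partial\,\mathscr{B}^n_m(f)}{\partial x_k}(x)=\frac{\partial f}{\partial x_k}(x).$$
   Context: $I=[0,1]$. $b_{i,m}(t)=\binom{m}{i}t^i(1-t)^{m-i}$, $B^n_{i,m}(x)=\prod_k b_{i_k,m}(x_k)$ for $i\in\{0,\ldots,m\}^n$, and $\mathscr{B}^n_m(f)=\sum_i f(\tfrac{i}{m})B^n_{i,m}$ with $\tfrac im=(\tfrac{i_1}{m},\ldots,\tfrac{i_n}{m})$. *)

(* Defs.v *)
From Stdlib Require Import Reals.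
Open Scope R_scope.

(* Points of R^n are encoded as functions nat -> R; only coordinates
   0..n-1 are meaningful. *)

Definition in_cube (n : nat) (y : nat -> R) : Prop :=
  forall k, (k < n)%nat -> 0 <= y k <= 1.
Definition in_open_cube (n : nat) (y : nat -> R) : Prop :=
  forall k, (k < n)%nat -> 0 < y k < 1.

(* f only depends on the first n coordinates (it is a function on R^n). *)
Definition depends_on_first (n : nat) (f : (nat -> R) -> R) : Prop :=
  forall y z, (forall k, (k < n)%nat -> y k = z k) -> f y = f z.

Definition bounded_on_cube (n : nat) (f : (nat -> R) -> R) : Prop :=
  exists M, forall y, in_cube n y -> Rabs (f y) <= M.

Fixpoint sum_lt (n : nat) (g : nat -> R) : R :=
  match n with
  | O => 0
  | S n' => sum_lt n' g + g n'
  end.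

Definition norm_n (n : nat) (v : nat -> R) : R := sqrt (sum_lt n (fun k => (v k)^2)).

Definition frechet_differentiable_at (n : nat) (f : (nat -> R) -> R) (x : nat -> R) : Prop :=
  exists g : nat -> R,
    forall eps, 0 < eps -> exists delta, 0 < delta /\
      forall y, in_cube n y ->
        norm_n n (fun k => y k - x k) < delta ->
        Rabs (f y - f x - sum_lt n (fun k => g k * (y k - x k)))
          <= eps * norm_n n (fun k => y k - x k).

Definition upd (x : nat -> R) (k : nat) (t : R) : nat -> R :=
  fun j => if Nat.eqb j k then t else x j.

Definition bern_b (i m : nat) (t : R) : R := C m i * t ^ i * (1 - t) ^ (m - i).

(* Sum of F i over all multi-indices i : {0..n-1} -> {0..m}
   (coordinates k >= n of the multi-index are set to 0). *)
Fixpoint msum (n m : nat) (F : (nat -> nat) -> R) : R :=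
  match n with
  | O => F (fun _ => O)
  | S n' => sum_f_R0 (fun j => msum n' m (fun i => F (fun k => if Nat.eqb k n' then j else i k))) m
  end.

Fixpoint prod_lt (n : nat) (g : nat -> R) : R :=
  match n with
  | O => 1
  | S n' => prod_lt n' g * g n'
  end.
Definition bern_B (n m : nat) (i : nat -> nat) (x : nat -> R) : R :=
  prod_lt n (fun k => bern_b (i k) m (x k)).

Definition bernstein (n m : nat) (f : (nat -> R) -> R) (x : nat -> R) : R :=
  msum n m (fun i => f (fun k => INR (i k) / INR m) * bern_B n m i x).

(* Main.v *)
Require Import Defs.
From Stdlib Require Import Reals Lra Lia Psatz.
Open Scope R_scope.

Definition BE (m : nat) (t : R) (phi : nat -> R) : R :=
  sum_f_R0 (fun i => phi i * bern_b i m t) m.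

Lemma E1_ext m t phi psi : (forall i, (i <= m)%nat -> phi i = psi i) ->
  BE m t phi = BE m t psi.
Proof. intros H; unfold BE; apply sum_eq; intros i Hi; rewrite H; auto. Qed.

Lemma E1_plus m t phi psi : BE m t (fun i => phi i + psi i) = BE m t phi + BE m t psi.
Proof. unfold BE; rewrite <- sum_plus; apply sum_eq; intros; ring. Qed.

Lemma E1_scal m t c phi : BE m t (fun i => c * phi i) = c * BE m t phi.
Proof. unfold BE; rewrite scal_sum; apply sum_eq; intros; ring. Qed.

Lemma bern_pascal m j t : (j < m)%nat ->
  bern_b (S j) (S m) t = t * bern_b j m t + (1 - t) * bern_b (S j) m t.
Proof.
  intros H; unfold bern_b. rewrite <- pascal by exact H.
  replace (S m - S j)%nat with (m - j)%nat by lia.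
  replace (m - j)%nat with (S (m - S j)) by lia. simpl. ring.
Qed.

Lemma C_nn m : C m m = 1.
Proof. unfold C. rewrite Nat.sub_diag. simpl. field. apply INR_fact_neq_0. Qed.
Lemma C_n0 m : C m 0 = 1.
Proof. unfold C. rewrite Nat.sub_0_r. simpl. field. apply INR_fact_neq_0. Qed.

Lemma E1_step m t phi :
  BE (S m) t phi = t * BE m t (fun i => phi (S i)) + (1 - t) * BE m t phi.
Proof.
  unfold BE. rewrite decomp_sum by lia. simpl pred.
  destruct m as [|m].
  - simpl. unfold bern_b. rewrite !C_nn, !C_n0. simpl. ring.
  - rewrite tech5. rewrite (decomp_sum (fun i => phi i * bern_b i (S m) t) (S m)) by lia.
    simpl pred. rewrite (tech5 (fun i => phi (S i) * bern_b i (S m) t)).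
    rewrite (sum_eq (fun i => phi (S i) * bern_b (S i) (S (S m)) t)
       (fun i => t * (phi (S i) * bern_b i (S m) t) + (1-t) * (phi (S i) * bern_b (S i) (S m) t))).
    2:{ intros i Hi. rewrite bern_pascal by lia. ring. }
    rewrite sum_plus. rewrite (sum_eq (fun i => t * _) (fun i => phi (S i) * bern_b i (S m) t * t)) by (intros; ring). rewrite <- !scal_sum. rewrite (sum_eq (fun i => (1-t) * _) (fun i => phi (S i) * bern_b (S i) (S m) t * (1-t))) by (intros; ring). rewrite <- !scal_sum.
    replace (bern_b 0 (S (S m)) t) with ((1-t) * bern_b 0 (S m) t).
    2:{ unfold bern_b; rewrite !C_n0; simpl; ring. }
    replace (bern_b (S (S m)) (S (S m)) t) with (t * bern_b (S m) (S m) t).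
    2:{ unfold bern_b; rewrite !C_nn, !Nat.sub_diag; simpl; ring. }
    ring.
Qed.

Lemma E1_0 t phi : BE 0 t phi = phi 0%nat.
Proof. unfold BE, bern_b; simpl. rewrite C_n0. ring. Qed.

Definition cm (m : nat) (t : R) (r : nat) := BE m t (fun i => (INR i - INR m * t) ^ r).

Lemma E1_poly m t a0 a1 a2 a3 a4 :
  BE m t (fun i => a0 + a1 * (INR i - INR m * t) + a2 * (INR i - INR m * t)^2
     + a3 * (INR i - INR m * t)^3 + a4 * (INR i - INR m * t)^4)
  = a0 * cm m t 0 + a1 * cm m t 1 + a2 * cm m t 2 + a3 * cm m t 3 + a4 * cm m t 4.
Proof.
  unfold cm. rewrite !E1_plus, !E1_scal.
  rewrite (E1_ext m t (fun _ => a0) (fun i => a0 * (INR i - INR m * t)^0)) by (intros; simpl; ring).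
  rewrite (E1_ext m t (fun i => (INR i - INR m * t)) (fun i => (INR i - INR m * t)^1)) by (intros; simpl; ring).
  rewrite !E1_scal. ring.
Qed.

Lemma cm_step m t r : (r <= 4)%nat ->
  cm (S m) t r = t * BE m t (fun i => (INR i - INR m * t + (1 - t)) ^ r)
               + (1 - t) * BE m t (fun i => (INR i - INR m * t - t) ^ r).
Proof.
  intros _. unfold cm. rewrite E1_step. f_equal; f_equal; apply E1_ext; intros; rewrite !S_INR; f_equal; ring.
Qed.

Lemma cm_all m t :
  cm m t 0 = 1 /\ cm m t 1 = 0 /\ cm m t 2 = INR m * (t * (1 - t)) /\
  cm m t 3 = INR m * (t * (1 - t)) * (1 - 2 * t) /\
  cm m t 4 = 3 * INR m ^ 2 * (t * (1-t))^2 + INR m * (t * (1-t)) * (1 - 6 * (t * (1-t))).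
Proof.
  induction m as [|m IH].
  - unfold cm; rewrite !E1_0; simpl; repeat split; ring.
  - destruct IH as (H0 & H1 & H2 & H3 & H4).
    set (u := fun i => INR i - INR m * t).
    assert (Hp : forall s r, (r <= 4)%nat -> BE m t (fun i => (INR i - INR m * t + s) ^ r) =
       match r with
       | 0 => cm m t 0
       | 1 => s * cm m t 0 + cm m t 1
       | 2 => s^2 * cm m t 0 + 2 * s * cm m t 1 + cm m t 2
       | 3 => s^3 * cm m t 0 + 3 * s^2 * cm m t 1 + 3 * s * cm m t 2 + cm m t 3
       | _ => s^4 * cm m t 0 + 4 * s^3 * cm m t 1 + 6 * s^2 * cm m t 2 + 4 * s * cm m t 3 + cm m t 4
       end).
    { intros s r Hr.
      destruct r as [|[|[|[|[|r]]]]]; try lia.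
      - transitivity (1 * cm m t 0 + 0 * cm m t 1 + 0 * cm m t 2 + 0 * cm m t 3 + 0 * cm m t 4); [|ring].
        rewrite <- E1_poly. apply E1_ext; intros; simpl; ring.
      - transitivity (s * cm m t 0 + 1 * cm m t 1 + 0 * cm m t 2 + 0 * cm m t 3 + 0 * cm m t 4); [|ring].
        rewrite <- E1_poly. apply E1_ext; intros; simpl; ring.
      - transitivity (s^2 * cm m t 0 + (2*s) * cm m t 1 + 1 * cm m t 2 + 0 * cm m t 3 + 0 * cm m t 4); [|ring].
        rewrite <- E1_poly. apply E1_ext; intros; simpl; ring.
      - transitivity (s^3 * cm m t 0 + (3*s^2) * cm m t 1 + (3*s) * cm m t 2 + 1 * cm m t 3 + 0 * cm m t 4); [|ring].
        rewrite <- E1_poly. apply E1_ext; intros; simpl; ring.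
      - transitivity (s^4 * cm m t 0 + (4*s^3) * cm m t 1 + (6*s^2) * cm m t 2 + (4*s) * cm m t 3 + 1 * cm m t 4); [|ring].
        rewrite <- E1_poly. apply E1_ext; intros; simpl; ring. }
    assert (Hq : forall r, (r <= 4)%nat -> BE m t (fun i => (INR i - INR m * t - t) ^ r) =
                    BE m t (fun i => (INR i - INR m * t + (- t)) ^ r)).
    { intros; apply E1_ext; intros; f_equal; ring. }
    rewrite !cm_step by lia. rewrite (Hq 0%nat), (Hq 1%nat), (Hq 2%nat), (Hq 3%nat), (Hq 4%nat) by lia. rewrite !(Hp (1-t) 0%nat), (Hp (1-t) 1%nat), (Hp (1-t) 2%nat), (Hp (1-t) 3%nat), (Hp (1-t) 4%nat), (Hp (-t) 0%nat), (Hp (-t) 1%nat), (Hp (-t) 2%nat), (Hp (-t) 3%nat), (Hp (-t) 4%nat) by lia.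
    rewrite H0, H1, H2, H3, H4, S_INR. repeat split.
    all: try ring.


Qed.

Definition ins (i : nat -> nat) (n a : nat) : nat -> nat :=
  fun k => if Nat.eqb k n then a else i k.

Lemma msum_S n m F : msum (S n) m F = sum_f_R0 (fun j => msum n m (fun i => F (ins i n j))) m.
Proof. reflexivity. Qed.

Definition bnd (n m : nat) (i : nat -> nat) := forall l, (l < n)%nat -> (i l <= m)%nat.

Lemma msum_ext n m F G : (forall i, bnd n m i -> F i = G i) -> msum n m F = msum n m G.
Proof.
  revert F G; induction n as [|n IH]; intros F G H.
  - simpl. apply H. intros l Hl; lia.
  - rewrite !msum_S. apply sum_eq. intros j Hj. apply IH. intros i Hi. apply H.
    intros l Hl. unfold ins. destruct (Nat.eqb_spec l n). lia. apply Hi. lia.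
Qed.

Lemma msum_plus n m F G : msum n m (fun i => F i + G i) = msum n m F + msum n m G.
Proof.
  revert F G; induction n as [|n IH]; intros F G.
  - reflexivity.
  - rewrite !msum_S. rewrite <- sum_plus. apply sum_eq; intros. apply IH.
Qed.

Lemma msum_scal n m c F : msum n m (fun i => c * F i) = c * msum n m F.
Proof.
  revert F; induction n as [|n IH]; intros F.
  - reflexivity.
  - rewrite !msum_S. rewrite scal_sum. apply sum_eq; intros. rewrite IH. ring.
Qed.

Lemma msum_le n m F G : (forall i, bnd n m i -> F i <= G i) -> msum n m F <= msum n m G.
Proof.
  revert F G; induction n as [|n IH]; intros F G H.
  - simpl. apply H. intros l Hl; lia.
  - rewrite !msum_S. apply sum_Rle. intros j Hj. apply IH. intros i Hi. apply H.
    intros l Hl. unfold ins. destruct (Nat.eqb_spec l n). lia. apply Hi. lia.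
Qed.

Lemma msum_abs n m F : Rabs (msum n m F) <= msum n m (fun i => Rabs (F i)).
Proof.
  revert F; induction n as [|n IH]; intros F.
  - simpl. lra.
  - rewrite !msum_S. eapply Rle_trans. apply Rsum_abs. apply sum_Rle. intros; apply IH.
Qed.

Lemma sum_lt_plus p f g : sum_lt p (fun l => f l + g l) = sum_lt p f + sum_lt p g.
Proof. induction p; simpl; [ring| rewrite IHp; ring]. Qed.

Lemma sum_lt_scal p c f : sum_lt p (fun l => c * f l) = c * sum_lt p f.
Proof. induction p; simpl; [ring| rewrite IHp; ring]. Qed.

Lemma sum_lt_ext p f g : (forall l, (l < p)%nat -> f l = g l) -> sum_lt p f = sum_lt p g.
Proof. induction p; intros H; simpl. ring. rewrite IHp, H. ring. lia. intros; apply H; lia. Qed.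

Lemma sum_lt_le p f g : (forall l, (l < p)%nat -> f l <= g l) -> sum_lt p f <= sum_lt p g.
Proof. induction p; intros H; simpl; [lra| ]. assert (f p <= g p) by (apply H; lia).
  assert (sum_lt p f <= sum_lt p g) by (apply IHp; intros; apply H; lia). lra. Qed.

Lemma sum_lt_nonneg p f : (forall l, (l < p)%nat -> 0 <= f l) -> 0 <= sum_lt p f.
Proof. intros H. replace 0 with (sum_lt p (fun _ => 0)). apply sum_lt_le; auto.
  induction p; simpl; auto. rewrite IHp. ring. intros; apply H; lia. Qed.

Lemma msum_sum_lt n m p G : msum n m (fun i => sum_lt p (fun l => G l i)) = sum_lt p (fun l => msum n m (G l)).
Proof.
  induction p.
  - simpl. transitivity (msum n m (fun i => 0 * 0)). apply msum_ext; intros; ring.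
    rewrite msum_scal. ring.
  - simpl. rewrite msum_plus. rewrite IHp. reflexivity.
Qed.

Lemma prod_lt_ext n g h : (forall k, (k < n)%nat -> g k = h k) -> prod_lt n g = prod_lt n h.
Proof. induction n; intros H; simpl; auto. rewrite IHn, H; auto; lia. Qed.

Lemma bern_B_ins n m i a y : bern_B (S n) m (ins i n a) y = bern_B n m i y * bern_b a m (y n).
Proof.
  unfold bern_B. simpl. unfold ins at 2. rewrite Nat.eqb_refl. f_equal.
  apply prod_lt_ext. intros k Hk. unfold ins. destruct (Nat.eqb_spec k n). lia. auto.
Qed.

Lemma E1_one m t : BE m t (fun _ => 1) = 1.
Proof.
  unfold BE. transitivity ((t + (1 - t)) ^ m).
  rewrite binomial. apply sum_eq. intros; unfold bern_b; ring.
  replace (t + (1 - t)) with 1 by ring. apply pow1.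
Qed.

Lemma msum_one n m y : msum n m (fun i => bern_B n m i y) = 1.
Proof.
  induction n as [|n IH].
  - reflexivity.
  - rewrite msum_S. transitivity (sum_f_R0 (fun j => 1 * bern_b j m (y n)) m).
    + apply sum_eq. intros j _.
      transitivity (msum n m (fun i => bern_b j m (y n) * bern_B n m i y)).
      * apply msum_ext; intros; rewrite bern_B_ins; ring.
      * rewrite msum_scal, IH. ring.
    + apply E1_one.
Qed.

Lemma marg1 n m y phi j : (j < n)%nat ->
  msum n m (fun i => phi (i j) * bern_B n m i y) = BE m (y j) phi.
Proof.
  induction n as [|n IH]; intros Hj. lia.
  rewrite msum_S. destruct (Nat.eq_dec j n) as [->|Hne].
  - unfold BE. apply sum_eq. intros a _.
    transitivity (msum n m (fun i => (phi a * bern_b a m (y n)) * bern_B n m i y)).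
    + apply msum_ext; intros. rewrite bern_B_ins. unfold ins. rewrite Nat.eqb_refl. ring.
    + rewrite msum_scal, msum_one. ring.
  - transitivity (sum_f_R0 (fun a => BE m (y j) phi * bern_b a m (y n)) m).
    + apply sum_eq. intros a _.
      transitivity (msum n m (fun i => bern_b a m (y n) * (phi (i j) * bern_B n m i y))).
      * apply msum_ext; intros. rewrite bern_B_ins. unfold ins.
        destruct (Nat.eqb_spec j n). lia. ring.
      * rewrite msum_scal, IH by lia. ring.
    + transitivity (BE m (y j) phi * BE m (y n) (fun _ => 1)).
      unfold BE at 3; rewrite scal_sum; apply sum_eq; intros; ring.
      rewrite E1_one; ring.
Qed.

Lemma marg2 n m y phi psi j l : (j < n)%nat -> (l < n)%nat -> j <> l ->
  msum n m (fun i => phi (i j) * psi (i l) * bern_B n m i y) = BE m (y j) phi * BE m (y l) psi.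
Proof.
  induction n as [|n IH]; intros Hj Hl Hjl. lia.
  rewrite msum_S. destruct (Nat.eq_dec j n) as [->|Hne].
  - unfold BE at 1. rewrite Rmult_comm, scal_sum. apply sum_eq. intros a _.
    transitivity (msum n m (fun i => (phi a * bern_b a m (y n)) * (psi (i l) * bern_B n m i y))).
    + apply msum_ext; intros. rewrite bern_B_ins. unfold ins. rewrite Nat.eqb_refl.
      destruct (Nat.eqb_spec l n). lia. ring.
    + rewrite msum_scal, marg1 by lia. ring.
  - destruct (Nat.eq_dec l n) as [->|Hne2].
    + rewrite Rmult_comm. unfold BE at 1. rewrite Rmult_comm, scal_sum. apply sum_eq. intros a _.
      transitivity (msum n m (fun i => (psi a * bern_b a m (y n)) * (phi (i j) * bern_B n m i y))).
      * apply msum_ext; intros. rewrite bern_B_ins. unfold ins. rewrite Nat.eqb_refl.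
        destruct (Nat.eqb_spec j n). lia. ring.
      * rewrite msum_scal, marg1 by lia. ring.
    + transitivity (sum_f_R0 (fun a => (BE m (y j) phi * BE m (y l) psi) * bern_b a m (y n)) m).
      * apply sum_eq. intros a _.
        transitivity (msum n m (fun i => bern_b a m (y n) * (phi (i j) * psi (i l) * bern_B n m i y))).
        -- apply msum_ext; intros. rewrite bern_B_ins. unfold ins.
           destruct (Nat.eqb_spec j n). lia. destruct (Nat.eqb_spec l n). lia. ring.
        -- rewrite msum_scal, IH by lia. ring.
      * transitivity ((BE m (y j) phi * BE m (y l) psi) * BE m (y n) (fun _ => 1)).
        unfold BE at 5; rewrite scal_sum; apply sum_eq; intros; ring.
        rewrite E1_one; ring.
Qed.

Lemma mom1 m t : (1 <= m)%nat -> BE m t (fun i => INR i / INR m - t) = 0.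
Proof.
  intros Hm. assert (0 < INR m) by (apply lt_0_INR; lia).
  destruct (cm_all m t) as (_ & H1 & _).
  unfold cm in H1. rewrite (E1_ext m t _ (fun i => / INR m * (INR i - INR m * t)^1)).
  rewrite E1_scal, H1. ring. intros; simpl; field; lra.
Qed.

Lemma mom2 m t : (1 <= m)%nat -> BE m t (fun i => (INR i / INR m - t)^2) = t * (1 - t) / INR m.
Proof.
  intros Hm. assert (0 < INR m) by (apply lt_0_INR; lia).
  destruct (cm_all m t) as (_ & _ & H2 & _).
  unfold cm in H2. rewrite (E1_ext m t _ (fun i => (/ INR m)^2 * (INR i - INR m * t)^2)).
  rewrite E1_scal, H2. field; lra. intros; simpl; field; lra.
Qed.

Lemma mom4 m t : (1 <= m)%nat -> 0 <= t <= 1 ->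
  BE m t (fun i => (INR i / INR m - t)^4) <= 1 / INR m ^ 2.
Proof.
  intros Hm Ht. assert (1 <= INR m) by (apply (le_INR 1); lia).
  destruct (cm_all m t) as (_ & _ & _ & _ & H4).
  unfold cm in H4. rewrite (E1_ext m t _ (fun i => (/ INR m)^4 * (INR i - INR m * t)^4)).
  2:{ intros; simpl; field; lra. }
  rewrite E1_scal, H4.
  set (s := t * (1 - t)). assert (0 <= s <= 1/4) by (unfold s; split; [nra|pose proof (pow2_ge_0 (t - 1/2)); nra]).
  set (M := INR m) in *.
  assert (Hb : 3 * M ^ 2 * s ^ 2 + M * s * (1 - 6 * s) <= M ^ 2).
  { assert (s^2 <= 1/16) by nra. assert (M * s * (1 - 6*s) <= M * s) by nra.
    assert (M * s <= M^2 / 4) by nra. assert (3 * M^2 * s^2 <= 3 * M^2 / 16) by nra. nra. }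
  replace (1 / M^2) with ((/ M)^4 * M^2) by (field; lra).
  apply Rmult_le_compat_l. apply pow_le. left; apply Rinv_0_lt_compat; lra. exact Hb.
Qed.

Lemma C_pos m i : 0 < C m i.
Proof.
  unfold C. apply Rdiv_lt_0_compat. apply INR_fact_lt_0.
  apply Rmult_lt_0_compat; apply INR_fact_lt_0.
Qed.

Lemma bern_b_nonneg i m t : 0 <= t <= 1 -> 0 <= bern_b i m t.
Proof.
  intros Ht. unfold bern_b. apply Rmult_le_pos. apply Rmult_le_pos.
  left; apply C_pos. apply pow_le; lra. apply pow_le; lra.
Qed.

Lemma prod_lt_nonneg n g : (forall k, (k < n)%nat -> 0 <= g k) -> 0 <= prod_lt n g.
Proof. induction n; intros H; simpl. lra. apply Rmult_le_pos. apply IHn; intros; apply H; lia. apply H; lia. Qed.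

Lemma bern_B_nonneg n m i y : in_cube n y -> 0 <= bern_B n m i y.
Proof. intros Hy. apply prod_lt_nonneg. intros k Hk. apply bern_b_nonneg. apply Hy; auto. Qed.

Lemma BE_le m t phi psi : 0 <= t <= 1 -> (forall i, (i <= m)%nat -> phi i <= psi i) -> BE m t phi <= BE m t psi.
Proof.
  intros Ht H. unfold BE. apply sum_Rle. intros i Hi. apply Rmult_le_compat_r.
  apply bern_b_nonneg; auto. auto.
Qed.

Lemma dpl_ext f g x l : (forall t, f t = g t) -> derivable_pt_lim g x l -> derivable_pt_lim f x l.
Proof. intros H D eps He. destruct (D eps He) as [d Hd]. exists d. intros h H1 H2. rewrite !H. auto. Qed.

Lemma dpl_eqv f x l l' : l = l' -> derivable_pt_lim f x l -> derivable_pt_lim f x l'.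
Proof. intros ->; auto. Qed.

Definition bd (i m : nat) (t : R) : R :=
  C m i * (INR i * t ^ pred i * (1 - t) ^ (m - i) + t ^ i * (INR (m - i) * (1 - t) ^ pred (m - i) * (0 - 1))).

Lemma bern_b_deriv i m t : derivable_pt_lim (fun s => bern_b i m s) t (bd i m t).
Proof.
  unfold bern_b, bd.
  apply (dpl_ext _ (mult_real_fct (C m i) (mult_fct (fun s => s ^ i) (comp (fun s => s ^ (m - i)) (fun s => 1 - s))))).
  { intros s. unfold mult_real_fct, mult_fct, comp. ring. }
  apply derivable_pt_lim_scal.
  apply derivable_pt_lim_mult. apply derivable_pt_lim_pow.
  apply derivable_pt_lim_comp.
  - apply (derivable_pt_lim_minus (fct_cte 1) id). apply derivable_pt_lim_const. apply derivable_pt_lim_id.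
  - apply derivable_pt_lim_pow.
Qed.

Lemma pow_pred_mul k t : INR k * t ^ pred k * t = INR k * t ^ k.
Proof. destruct k; simpl; ring. Qed.

Lemma bd_nice i m t : (i <= m)%nat -> 0 < t < 1 ->
  bd i m t = bern_b i m t * (INR i - INR m * t) / (t * (1 - t)).
Proof.
  intros Hi Ht. unfold bd, bern_b.
  apply (Rmult_eq_reg_r (t * (1 - t))). 2:{ apply Rgt_not_eq. apply Rmult_lt_0_compat; lra. }
  replace (C m i * (INR i * t ^ pred i * (1 - t) ^ (m - i) + t ^ i * (INR (m - i) * (1 - t) ^ pred (m - i) * (0 - 1))) * (t * (1 - t)))
   with (C m i * ((INR i * t ^ pred i * t) * (1 - t) ^ (m - i) * (1 - t) - t ^ i * t * (INR (m - i) * (1 - t) ^ pred (m - i) * (1 - t)))) by ring.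
  rewrite pow_pred_mul, pow_pred_mul. rewrite minus_INR by exact Hi.
  field. lra.
Qed.

Lemma sum_deriv (G : nat -> R -> R) G' m t :
  (forall j, derivable_pt_lim (G j) t (G' j)) ->
  derivable_pt_lim (fun s => sum_f_R0 (fun j => G j s) m) t (sum_f_R0 G' m).
Proof.
  intros H. induction m.
  - simpl. apply H.
  - simpl. apply (derivable_pt_lim_plus (fun s => sum_f_R0 (fun j => G j s) m) (G (S m))); auto.
Qed.

Lemma msum_deriv n m (G : (nat -> nat) -> R -> R) G' t :
  (forall i, derivable_pt_lim (G i) t (G' i)) ->
  derivable_pt_lim (fun s => msum n m (fun i => G i s)) t (msum n m G').
Proof.
  revert G G'. induction n; intros G G' H.
  - simpl. apply H.
  - rewrite msum_S.
    apply (dpl_ext _ (fun s => sum_f_R0 (fun j => msum n m (fun i => G (ins i n j) s)) m)).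
    { intros s; rewrite msum_S; reflexivity. }
    apply (sum_deriv (fun j s => msum n m (fun i => G (ins i n j) s))).
    intros j. apply (IHn (fun i => G (ins i n j))). intros; apply H.
Qed.

Lemma sum_lt_single n k h : (k < n)%nat -> (forall l, (l < n)%nat -> l <> k -> h l = 0) ->
  sum_lt n h = h k.
Proof.
  induction n; intros Hk H. lia.
  simpl. destruct (Nat.eq_dec k n) as [->|Hne].
  - replace (sum_lt n h) with (sum_lt n (fun _ => 0 * 0)).
    + rewrite sum_lt_scal. ring.
    + apply sum_lt_ext. intros l Hl. rewrite H by lia. ring.
  - rewrite IHn by (auto; lia). rewrite (H n) by lia. ring.
Qed.

Lemma sq_sum n h : (sum_lt n h)^2 <= INR n * sum_lt n (fun l => h l ^ 2).
Proof.
  induction n.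
  - simpl. lra.
  - change (sum_lt (S n) h) with (sum_lt n h + h n).
    change (sum_lt (S n) (fun l => h l ^ 2)) with (sum_lt n (fun l => h l ^ 2) + h n ^ 2).
    rewrite S_INR.
    set (S0 := sum_lt n h) in *. set (T := sum_lt n (fun l => h l ^ 2)) in *.
    assert (HT : 0 <= T) by (apply sum_lt_nonneg; intros; apply pow2_ge_0).
    destruct (Nat.eq_dec n 0) as [->|Hn0].
    + unfold S0. simpl. nra.
    + assert (Hn : 0 < INR n) by (apply lt_0_INR; lia).
      set (N := INR n) in *. set (a := h n) in *.
      assert (H1 : N * (T + N * a ^ 2 - 2 * S0 * a) >= 0).
      { assert (0 <= (S0 - N * a)^2) by apply pow2_ge_0. nra. }
      assert (T + N * a ^ 2 - 2 * S0 * a >= 0).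
      { destruct (Rle_or_lt 0 (T + N * a ^ 2 - 2 * S0 * a)); [lra|nra]. }
      nra.
Qed.

Lemma prod_upd n k a v : (k < n)%nat ->
  prod_lt n (fun l => if Nat.eqb l k then a else v l) = prod_lt n (fun l => if Nat.eqb l k then 1 else v l) * a.
Proof.
  induction n; intros Hk. lia.
  simpl. destruct (Nat.eq_dec k n) as [->|Hne].
  - rewrite Nat.eqb_refl.
    rewrite (prod_lt_ext n _ v), (prod_lt_ext n (fun l => if Nat.eqb l n then 1 else v l) v). ring.
    all: intros l Hl; destruct (Nat.eqb_spec l n); [lia|auto].
  - rewrite IHn by lia. destruct (Nat.eqb_spec n k). lia. ring.
Qed.

Definition Qk (n m k : nat) (i : nat -> nat) (x : nat -> R) :=
  prod_lt n (fun l => if Nat.eqb l k then 1 else bern_b (i l) m (x l)).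

Lemma bern_B_upd n m k i x t : (k < n)%nat ->
  bern_B n m i (upd x k t) = Qk n m k i x * bern_b (i k) m t.
Proof.
  intros Hk. unfold bern_B, Qk. rewrite <- prod_upd by exact Hk.
  apply prod_lt_ext. intros l Hl. unfold upd. destruct (Nat.eqb_spec l k); subst; auto.
Qed.

Lemma bern_B_Qk n m k i x : (k < n)%nat ->
  bern_B n m i x = Qk n m k i x * bern_b (i k) m (x k).
Proof.
  intros Hk. rewrite <- bern_B_upd by exact Hk. unfold bern_B. apply prod_lt_ext.
  intros l _. unfold upd. destruct (Nat.eqb_spec l k); subst; auto.
Qed.

Definition yv (m : nat) (i : nat -> nat) : nat -> R := fun l => INR (i l) / INR m.

Lemma yv_cube n m i : (1 <= m)%nat -> bnd n m i -> in_cube n (yv m i).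
Proof.
  intros Hm Hi l Hl. unfold yv. assert (0 < INR m) by (apply lt_0_INR; lia).
  assert (INR (i l) <= INR m) by (apply le_INR; apply Hi; auto).
  assert (0 <= INR (i l)) by apply pos_INR.
  split. unfold Rdiv; apply Rmult_le_pos; [lra| left; apply Rinv_0_lt_compat; lra].
  apply (Rmult_le_reg_r (INR m)); auto. field_simplify; lra.
Qed.

Lemma sum_lt_const n c : sum_lt n (fun _ => c) = INR n * c.
Proof. induction n; simpl sum_lt. simpl; ring. rewrite IHn, S_INR. ring. Qed.

Lemma sum_lt_mulr n h c : sum_lt n h * c = sum_lt n (fun l => h l * c).
Proof. induction n; simpl. ring. rewrite <- IHn. ring. Qed.

Lemma deriv_part n m f x k : (k < n)%nat ->
  derivable_pt_lim (fun t => bernstein n m f (upd x k t)) (x k)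
    (msum n m (fun i => f (yv m i) * Qk n m k i x * bd (i k) m (x k))).
Proof.
  intros Hk.
  apply (dpl_ext _ (fun t => msum n m (fun i => f (yv m i) * Qk n m k i x * bern_b (i k) m t))).
  { intros t. unfold bernstein. apply msum_ext. intros i _. rewrite bern_B_upd by exact Hk.
    unfold yv. ring. }
  apply (msum_deriv n m (fun i t => f (yv m i) * Qk n m k i x * bern_b (i k) m t)).
  intros i.
  apply (dpl_ext _ (mult_real_fct (f (yv m i) * Qk n m k i x) (fun t => bern_b (i k) m t))).
  { intros t; reflexivity. }
  apply derivable_pt_lim_scal. apply bern_b_deriv.
Qed.

Lemma d_form n m f x k : (k < n)%nat -> (1 <= m)%nat -> 0 < x k < 1 ->
  msum n m (fun i => f (yv m i) * Qk n m k i x * bd (i k) m (x k)) =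
  INR m / (x k * (1 - x k)) * msum n m (fun i => f (yv m i) * (yv m i k - x k) * bern_B n m i x).
Proof.
  intros Hk Hm Hx. assert (0 < INR m) by (apply lt_0_INR; lia).
  rewrite <- msum_scal. apply msum_ext. intros i Hi.
  rewrite bd_nice by (auto; apply Hi; auto). rewrite (bern_B_Qk n m k i x Hk).
  unfold yv. field. split; [lra|]. split; lra.
Qed.

Definition rho n (x y : nat -> R) := sum_lt n (fun l => (y l - x l)^2).
Definition sig n (x y : nat -> R) := sum_lt n (fun l => (y l - x l)^4).

Lemma C_bound n m x k Rf eps K : (k < n)%nat -> (1 <= m)%nat -> in_cube n x -> 0 <= eps -> 0 <= K ->
  (forall y, in_cube n y -> Rabs (Rf y) * Rabs (y k - x k) <= eps * rho n x y + K * sig n x y) ->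
  Rabs (msum n m (fun i => Rf (yv m i) * (yv m i k - x k) * bern_B n m i x))
   <= eps * INR n / INR m + K * INR n / INR m ^ 2.
Proof.
  intros Hk Hm Hx He HK Hr. assert (0 < INR m) by (apply lt_0_INR; lia).
  eapply Rle_trans. apply msum_abs.
  eapply Rle_trans. apply (msum_le n m _ (fun i => eps * (rho n x (yv m i) * bern_B n m i x) + K * (sig n x (yv m i) * bern_B n m i x))).
  { intros i Hi. pose proof (bern_B_nonneg n m i x Hx).
    rewrite !Rabs_mult, (Rabs_pos_eq (bern_B _ _ _ _)) by auto.
    pose proof (Hr (yv m i) (yv_cube n m i Hm Hi)). nra. }
  rewrite msum_plus, !msum_scal.
  unfold rho, sig.
  rewrite (msum_ext n m (fun i => _ * _) (fun i => sum_lt n (fun l => (yv m i l - x l)^2 * bern_B n m i x)))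
    by (intros; apply sum_lt_mulr).
  rewrite (msum_ext n m (fun i => sum_lt n (fun l => (yv m i l - x l)^4) * _) (fun i => sum_lt n (fun l => (yv m i l - x l)^4 * bern_B n m i x)))
    by (intros; apply sum_lt_mulr).
  rewrite !msum_sum_lt.
  assert (A1 : sum_lt n (fun l => msum n m (fun i => (yv m i l - x l)^2 * bern_B n m i x)) <= INR n * (1 / INR m)).
  { rewrite <- sum_lt_const. apply sum_lt_le. intros l Hl.
    unfold yv. rewrite (marg1 n m x (fun a => (INR a / INR m - x l)^2) l Hl).
    rewrite mom2 by auto. destruct (Hx l Hl). unfold Rdiv. apply Rmult_le_compat_r.
    left; apply Rinv_0_lt_compat; auto. nra. }
  assert (A2 : sum_lt n (fun l => msum n m (fun i => (yv m i l - x l)^4 * bern_B n m i x)) <= INR n * (1 / INR m ^ 2)).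
  { rewrite <- sum_lt_const. apply sum_lt_le. intros l Hl.
    unfold yv. rewrite (marg1 n m x (fun a => (INR a / INR m - x l)^4) l Hl).
    apply mom4; auto. }
  replace (eps * INR n / INR m + K * INR n / INR m ^ 2) with (eps * (INR n * (1 / INR m)) + K * (INR n * (1 / INR m ^ 2))) by (field; lra).
  apply Rplus_le_compat; apply Rmult_le_compat_l; auto.
Qed.

Lemma const_part n m x k : (k < n)%nat -> (1 <= m)%nat ->
  msum n m (fun i => (yv m i k - x k) * bern_B n m i x) = 0.
Proof.
  intros Hk Hm. unfold yv. rewrite (marg1 n m x (fun a => INR a / INR m - x k) k Hk).
  apply mom1; auto.
Qed.

Lemma lin_part n m x k g : (k < n)%nat -> (1 <= m)%nat ->
  msum n m (fun i => sum_lt n (fun l => g l * (yv m i l - x l)) * (yv m i k - x k) * bern_B n m i x)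
  = g k * (x k * (1 - x k) / INR m).
Proof.
  intros Hk Hm.
  rewrite (msum_ext n m _ (fun i => sum_lt n (fun l => g l * ((yv m i l - x l) * (yv m i k - x k) * bern_B n m i x)))).
  2:{ intros i _. rewrite Rmult_assoc, sum_lt_mulr. apply sum_lt_ext; intros; ring. }
  rewrite msum_sum_lt.
  rewrite (sum_lt_ext n _ (fun l => g l * msum n m (fun i => (yv m i l - x l) * (yv m i k - x k) * bern_B n m i x)))
    by (intros; apply msum_scal).
  rewrite (sum_lt_single n k); [| exact Hk |].
  - f_equal. unfold yv.
    rewrite (msum_ext n m _ (fun i => (INR (i k) / INR m - x k)^2 * bern_B n m i x)) by (intros; ring).
    rewrite (marg1 n m x (fun a => (INR a / INR m - x k)^2) k Hk). apply mom2; auto.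
  - intros l Hl Hlk. unfold yv.
    rewrite (marg2 n m x (fun a => INR a / INR m - x l) (fun a => INR a / INR m - x k) l k Hl Hk Hlk).
    rewrite (mom1 m (x k)) by auto. ring.
Qed.

Lemma lin_bound n g a : (forall l, (l < n)%nat -> Rabs (a l) <= 1) ->
  Rabs (sum_lt n (fun l => g l * a l)) <= sum_lt n (fun l => Rabs (g l)).
Proof.
  induction n; intros H; simpl sum_lt. rewrite Rabs_R0; lra.
  eapply Rle_trans. apply Rabs_triang. apply Rplus_le_compat. apply IHn; intros; apply H; lia.
  rewrite Rabs_mult. assert (Rabs (a n) <= 1) by (apply H; lia).
  pose proof (Rabs_pos (g n)). pose proof (Rabs_pos (a n)). nra.
Qed.

Lemma term_le_sum n h k : (k < n)%nat -> (forall l, (l < n)%nat -> 0 <= h l) -> h k <= sum_lt n h.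
Proof.
  induction n; intros Hk H. lia. simpl.
  assert (0 <= sum_lt n h) by (apply sum_lt_nonneg; intros; apply H; lia).
  destruct (Nat.eq_dec k n) as [->|Hne]. lra.
  assert (h k <= sum_lt n h) by (apply IHn; [lia| intros; apply H; lia]).
  assert (0 <= h n) by (apply H; lia). lra.
Qed.

Lemma sqrt_sq_abs h : sqrt (h ^ 2) = Rabs h.
Proof. rewrite <- pow2_abs. apply sqrt_pow2. apply Rabs_pos. Qed.

Lemma partial_is_g n f x g k : (k < n)%nat ->
  depends_on_first n f -> in_open_cube n x ->
  (forall eps, 0 < eps -> exists delta, 0 < delta /\
      forall y, in_cube n y ->
        norm_n n (fun k => y k - x k) < delta ->
        Rabs (f y - f x - sum_lt n (fun k => g k * (y k - x k)))
          <= eps * norm_n n (fun k => y k - x k)) ->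
  derivable_pt_lim (fun t => f (upd x k t)) (x k) (g k).
Proof.
  intros Hk Hdep Hx Hg eps He.
  destruct (Hg (eps/2)) as [d [Hd Hdd]]. lra.
  destruct (Hx k Hk) as [Hx0 Hx1].
  assert (Hpos : 0 < Rmin d (Rmin (x k) (1 - x k))).
  { apply Rmin_pos. lra. apply Rmin_pos; lra. }
  exists (mkposreal _ Hpos). intros h Hh0 Hh. simpl in Hh.
  assert (Hh1 : Rabs h < d) by (eapply Rlt_le_trans; [exact Hh| apply Rmin_l]).
  assert (Hh2 : Rabs h < Rmin (x k) (1 - x k)) by (eapply Rlt_le_trans; [exact Hh| apply Rmin_r]).
  assert (Hh3 : Rabs h < x k) by (eapply Rlt_le_trans; [exact Hh2| apply Rmin_l]).
  assert (Hh4 : Rabs h < 1 - x k) by (eapply Rlt_le_trans; [exact Hh2| apply Rmin_r]).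
  set (y := upd x k (x k + h)).
  assert (Hyc : in_cube n y).
  { intros l Hl. unfold y, upd. destruct (Nat.eqb_spec l k).
    - subst. split.
      + assert (-Rabs h <= h) by (pose proof (Rle_abs (-h)); rewrite Rabs_Ropp in *; lra). lra.
      + assert (h <= Rabs h) by apply Rle_abs. lra.
    - destruct (Hx l Hl); lra. }
  assert (Hnorm : norm_n n (fun j => y j - x j) = Rabs h).
  { unfold norm_n. rewrite (sum_lt_single n k); [| exact Hk |].
    - unfold y, upd. rewrite Nat.eqb_refl. replace (x k + h - x k) with h by ring. apply sqrt_sq_abs.
    - intros l Hl Hlk. unfold y, upd. destruct (Nat.eqb_spec l k). lia. simpl. ring. }
  assert (Hlin : sum_lt n (fun j => g j * (y j - x j)) = g k * h).
  { rewrite (sum_lt_single n k); [| exact Hk |].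
    - unfold y, upd. rewrite Nat.eqb_refl. ring.
    - intros l Hl Hlk. unfold y, upd. destruct (Nat.eqb_spec l k). lia. ring. }
  assert (Hfx : f (upd x k (x k)) = f x).
  { apply Hdep. intros j _. unfold upd. destruct (Nat.eqb_spec j k); subst; auto. }
  rewrite Hfx. fold y.
  assert (Hb := Hdd y Hyc). rewrite Hnorm, Hlin in Hb. specialize (Hb Hh1).
  assert (Hha : 0 < Rabs h) by (apply Rabs_pos_lt; auto).
  replace ((f y - f x) / h - g k) with ((f y - f x - g k * h) / h) by (field; auto).
  unfold Rdiv. rewrite Rabs_mult, Rabs_inv.
  apply (Rmult_lt_reg_r (Rabs h)); auto. rewrite Rmult_assoc, Rinv_l by lra. nra.
Qed.

Lemma rem_bound n x k (Rf : (nat -> R) -> R) Mp eps d : (k < n)%nat -> in_cube n x ->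
  0 <= eps -> 0 < d -> 0 <= Mp ->
  (forall y, in_cube n y -> norm_n n (fun j => y j - x j) < d -> Rabs (Rf y) <= eps * norm_n n (fun j => y j - x j)) ->
  (forall y, in_cube n y -> Rabs (Rf y) <= Mp) ->
  forall y, in_cube n y -> Rabs (Rf y) * Rabs (y k - x k) <= eps * rho n x y + (Mp * INR n / d ^ 4) * sig n x y.
Proof.
  intros Hk Hx He Hd HM Hnear Hfar y Hy.
  assert (Hrho : 0 <= rho n x y) by (apply sum_lt_nonneg; intros; apply pow2_ge_0).
  assert (Hsig : 0 <= sig n x y) by (apply sum_lt_nonneg; intros l _;
     replace ((y l - x l)^4) with (((y l - x l)^2)^2) by ring; apply pow2_ge_0).
  assert (Hnorm : norm_n n (fun j => y j - x j) = sqrt (rho n x y)) by reflexivity.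
  assert (Hd4 : 0 < d ^ 4) by (apply pow_lt; auto).
  assert (HK : 0 <= Mp * INR n / d ^ 4).
  { unfold Rdiv. apply Rmult_le_pos. apply Rmult_le_pos; auto. apply pos_INR.
    left; apply Rinv_0_lt_compat; auto. }
  assert (Hak : Rabs (y k - x k) <= sqrt (rho n x y)).
  { rewrite <- sqrt_sq_abs. apply sqrt_le_1_alt. unfold rho.
    apply (term_le_sum n (fun l => (y l - x l)^2) k Hk). intros; apply pow2_ge_0. }
  pose proof (Rabs_pos (Rf y)). pose proof (Rabs_pos (y k - x k)).
  pose proof (sqrt_pos (rho n x y)).
  destruct (Rlt_or_le (norm_n n (fun j => y j - x j)) d) as [Hlt|Hge].
  - pose proof (Hnear y Hy Hlt) as Hn. rewrite Hnorm in Hn.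
    assert (Rabs (Rf y) * Rabs (y k - x k) <= eps * sqrt (rho n x y) * sqrt (rho n x y)).
    { apply Rmult_le_compat; auto. }
    rewrite Rmult_assoc, sqrt_sqrt in H2 by auto.
    pose proof (Rmult_le_pos _ _ HK Hsig). lra.
  - rewrite Hnorm in Hge.
    assert (Hr2 : d ^ 2 <= rho n x y).
    { rewrite <- (sqrt_sqrt (rho n x y)) by auto. simpl. nra. }
    assert (Hsq : (rho n x y)^2 <= INR n * sig n x y).
    { unfold rho, sig. eapply Rle_trans. apply (sq_sum n (fun l => (y l - x l)^2)).
      right. f_equal. apply sum_lt_ext. intros; ring. }
    assert (H4 : d ^ 4 <= INR n * sig n x y).
    { replace (d^4) with ((d^2)^2) by ring. eapply Rle_trans; [|exact Hsq].
      apply pow_incr. split; auto. apply pow2_ge_0. }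
    assert (Ha1 : Rabs (y k - x k) <= 1).
    { destruct (Hy k Hk), (Hx k Hk). apply Rabs_le. lra. }
    assert (Rabs (Rf y) * Rabs (y k - x k) <= Mp).
    { pose proof (Hfar y Hy). nra. }
    assert (Mp <= Mp * INR n / d ^ 4 * sig n x y).
    { replace (Mp * INR n / d ^ 4 * sig n x y) with (Mp * ((INR n * sig n x y) / d ^ 4)) by (field; lra).
      rewrite <- (Rmult_1_r Mp) at 1. apply Rmult_le_compat_l; auto.
      apply (Rmult_le_reg_r (d^4)); auto. field_simplify; lra. }
    pose proof (Rmult_le_pos _ _ He Hrho). lra.
Qed.

Theorem mainTheorem8 (n : nat) (f : (nat -> R) -> R) (x : nat -> R) :
  (1 <= n)%nat ->
  depends_on_first n f ->
  bounded_on_cube n f ->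
  in_open_cube n x ->
  frechet_differentiable_at n f x ->
  forall k, (k < n)%nat ->
  forall l, derivable_pt_lim (fun t => f (upd x k t)) (x k) l ->
  exists d : nat -> R,
    (forall m, derivable_pt_lim (fun t => bernstein n m f (upd x k t)) (x k) (d m)) /\
    Un_cv d l.
Proof.
  intros Hn Hdep [M HM] Hx [g Hg] k Hk l Hl.
  assert (Hxc : in_cube n x) by (intros j Hj; destruct (Hx j Hj); lra).
  destruct (Hx k Hk) as [Hx0 Hx1].
  assert (Hlg : l = g k) by (eapply uniqueness_limite; [exact Hl| apply (partial_is_g n f x g k); auto]).
  subst l.
  set (c := x k * (1 - x k)). assert (Hc : 0 < c) by (unfold c; nra).
  set (Rf := fun y => f y - f x - sum_lt n (fun j => g j * (y j - x j))).
  set (Mp := 2 * M + sum_lt n (fun j => Rabs (g j))).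
  assert (HM0 : 0 <= M) by (pose proof (HM x Hxc); pose proof (Rabs_pos (f x)); lra).
  assert (HMp : 0 <= Mp).
  { unfold Mp. pose proof (sum_lt_nonneg n (fun j => Rabs (g j)) (fun j _ => Rabs_pos (g j))). lra. }
  assert (Hfar : forall y, in_cube n y -> Rabs (Rf y) <= Mp).
  { intros y Hy. unfold Rf, Mp.
    assert (Rabs (sum_lt n (fun j => g j * (y j - x j))) <= sum_lt n (fun j => Rabs (g j))).
    { apply lin_bound. intros j Hj. destruct (Hy j Hj), (Hxc j Hj). apply Rabs_le; lra. }
    pose proof (HM y Hy). pose proof (HM x Hxc).
    set (S := sum_lt n (fun j => g j * (y j - x j))) in *.
    replace (f y - f x - S) with ((f y + - f x) + - S) by ring.
    eapply Rle_trans. apply Rabs_triang. rewrite Rabs_Ropp.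
    pose proof (Rabs_triang (f y) (- f x)). rewrite Rabs_Ropp in H2. lra. }
  exists (fun m => msum n m (fun i => f (yv m i) * Qk n m k i x * bd (i k) m (x k))). split.
  - intros m. apply deriv_part; auto.
  - intros eps He.
    assert (HnR : 1 <= INR n) by (apply (le_INR 1); lia).
    set (e1 := eps * c / (2 * INR n)).
    assert (He1 : 0 < e1).
    { unfold e1. apply Rdiv_lt_0_compat. nra. lra. }
    destruct (Hg e1 He1) as [d [Hd Hdd]].
    set (K := Mp * INR n / d ^ 4).
    assert (Hd4 : 0 < d ^ 4) by (apply pow_lt; auto).
    assert (HK : 0 <= K).
    { unfold K, Rdiv. apply Rmult_le_pos. apply Rmult_le_pos; auto. apply pos_INR.
      left; apply Rinv_0_lt_compat; auto. }
    assert (Hpt := rem_bound n x k Rf Mp e1 d Hk Hxc (Rlt_le _ _ He1) Hd HMp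
                    (fun y Hy Hn => Hdd y Hy Hn) Hfar).
    fold K in Hpt.
    destruct (INR_unbounded (2 * K * INR n / (c * eps))) as [N0 HN0].
    exists (max N0 1). intros m Hm. unfold R_dist.
    assert (Hm1 : (1 <= m)%nat) by lia.
    assert (HmR : 0 < INR m) by (apply lt_0_INR; lia).
    assert (HmN : INR N0 <= INR m) by (apply le_INR; lia).
    rewrite d_form by auto. fold c.
    rewrite (msum_ext n m _ (fun i => (f x * ((yv m i k - x k) * bern_B n m i x)
        + sum_lt n (fun j => g j * (yv m i j - x j)) * (yv m i k - x k) * bern_B n m i x)
        + Rf (yv m i) * (yv m i k - x k) * bern_B n m i x)) by (intros; unfold Rf; ring).
    rewrite !msum_plus, msum_scal, const_part, lin_part by auto. fold c.
    set (Cm := msum n m (fun i => Rf (yv m i) * (yv m i k - x k) * bern_B n m i x)).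
    assert (HC : Rabs Cm <= e1 * INR n / INR m + K * INR n / INR m ^ 2).
    { apply C_bound; auto. lra. }
    replace (INR m / c * (f x * 0 + g k * (c / INR m) + Cm) - g k) with (INR m / c * Cm) by (field; lra).
    rewrite Rabs_mult, (Rabs_pos_eq (INR m / c)) by (apply Rlt_le, Rdiv_lt_0_compat; auto).
    eapply Rle_lt_trans. apply Rmult_le_compat_l. apply Rlt_le, Rdiv_lt_0_compat; auto. exact HC.
    replace (INR m / c * (e1 * INR n / INR m + K * INR n / INR m ^ 2)) with (eps / 2 + K * INR n / (c * INR m))
      by (unfold e1; field; repeat split; lra).
    assert (K * INR n / (c * INR m) < eps / 2).
    { assert (Hq : 2 * K * INR n / (c * eps) < INR m) by lra.
      apply (Rmult_lt_reg_r (c * INR m)). nra.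
      replace (K * INR n / (c * INR m) * (c * INR m)) with (K * INR n) by (field; lra).
      assert (2 * K * INR n < INR m * (c * eps)).
      { apply (Rmult_lt_reg_r (/ (c * eps))). apply Rinv_0_lt_compat; nra.
        replace (2 * K * INR n * / (c * eps)) with (2 * K * INR n / (c * eps)) by reflexivity.
        replace (INR m * (c * eps) * / (c * eps)) with (INR m) by (field; lra). lra. }
      nra. }
    lra.
Qed.
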